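(* Let $k$ be a field of characteristic $0$, $A=kQ_A/I_A$ a radical square zero algebra, and $B$ the algebra obtained by gluing two distinct non-isolated vertices $e_1,e_n$ lying in the same block of $A$. If $Z_{spp}=0$, then there is a Lie algebra isomorphism $\mathrm{HH}^1(B)\cong\mathrm{HH}^1(A)\times k$.
   Context: A radical square zero algebra is $A=kQ_A/I_A$ with $I_A$ generated by all paths of length 2 of the finite quiver $Q_A$. Gluing: $B\subseteq A$ generated by $f_1=e_1+e_n$, the other vertex idempotents $f_i=e_i$ and all arrows; $B\cong kQ_B/I_B$ with $Q_B$ obtained by identifying $e_1,e_n$ to $f_1$ (arrow $\alpha\mapsto\alpha^*$, path $p\mapsto p^*$, $e_1^*=e_n^*=f_1$) and $I_B$ generated by all length-2 paths of $Q_B$. Blocks of $A$ correspond to connected components of $Q_A$. For path sets $X,Y$, $k(X\|Y)$ has basis the pairs $x\|y$ of parallel paths. $\delta^1_B:k((Q_B)_1\|\mathcal B_B)\to k((Q_B)_2\|\mathcal B_B)$ ($\mathcal B_B$ = vertices and arrows of $Q_B$), $a\|\gamma\mapsto\sum_{r}r\|r^{a\|\gamma}$ over length-2 paths $r$, where $r^{a\|\gamma}$ is the sum over occurrences of $a$ in $r$ of the path obtained by replacing that occurrence by $\gamma$, keeping only paths in $\mathcal B_B$. A special pair is $(\alpha,p)$ with $\alpha$ an arrow of $Q_A$ starting or ending at $e_1$ or $e_n$, $p$ a vertex or arrow of $Q_A$, $\alpha^*$ parallel to $p^*$ in $Q_B$ but $\alpha$ not parallel to $p$ in $Q_A$; $Z_{spp}$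 is the intersection of $\mathrm{Ker}\,\delta^1_B$ with the span of the $\alpha^*\|p^*$ over special pairs. *)

(* Defs.v *)
From HB Require Import structures.
From mathcomp Require Import all_boot all_order all_algebra.
Set Implicit Arguments. Unset Strict Implicit. Unset Printing Implicit Defensive.
Import Order.TTheory GRing.Theory Num.Theory.
Local Open Scope ring_scope.

(** * Finite-dimensional algebras given by a basis B and structure
    constants [m : B -> B -> option B] (product of two basis elements is
    either a basis element or zero). *)
Section StructAlg.
Variables (k : fieldType) (B : finType) (m : B -> B -> option B).

Local Notation elt := {ffun B -> k}.
Local Notation endo := {ffun B -> {ffun B -> k}}.
Definition scl (c : k) (x : elt) : elt := [ffun d => c * x d].
Definition sclE (c : k) (M : endo) : endo := [ffun b => scl c (M b)].
Definition dlt (b : B) : elt := [ffun c => (c == b)%:R].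
Definition mulm (x y : elt) : elt :=
  \sum_(b : B) \sum_(c : B) scl (x b * y c) (oapp dlt 0 (m b c)).

(* k-linear endomorphisms, given by the images of the basis elements *)
Definition app (M : endo) (x : elt) : elt := \sum_(b : B) scl (x b) (M b).
Definition comp (M N : endo) : endo := [ffun b => app M (N b)].
Definition lbr (M N : endo) : endo := comp M N - comp N M.

Definition isDer (M : endo) : Prop :=
  forall b c, app M (mulm (dlt b) (dlt c)) = mulm (M b) (dlt c) + mulm (dlt b) (M c).
Definition isInn (M : endo) : Prop :=
  exists a : elt, forall b, M b = mulm a (dlt b) - mulm (dlt b) a.
End StructAlg.

(** HH^1(X) = Der(X)/Inn(X) with the commutator bracket.
    [HH1_iso_times_k mX mY] : there is a Lie algebra isomorphism
    HH^1(X) ~= HH^1(Y) x k  (k abelian), presented through a linear lift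
    (f,g) : Der(X) -> Der(Y) x k of the isomorphism on the quotients. *)
Definition HH1_iso_times_k (k : fieldType) (BX BY : finType)
  (mX : BX -> BX -> option BX) (mY : BY -> BY -> option BY) : Prop :=
  exists (f : {ffun BX -> {ffun BX -> k}} -> {ffun BY -> {ffun BY -> k}}) (g : {ffun BX -> {ffun BX -> k}} -> k),
  [/\ (forall D, isDer mX D -> isDer mY (f D)),
      (forall c D1 D2, isDer mX D1 -> isDer mX D2 ->
          f (sclE c D1 + D2) = sclE c (f D1) + f D2 /\ g (sclE c D1 + D2) = c * g D1 + g D2),
      (forall D, isDer mX D -> ((isInn mY (f D) /\ g D = 0) <-> isInn mX D)),
      (forall D' c, isDer mY D' ->
          exists D, [/\ isDer mX D, isInn mY (f D - D') & g D = c]) &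
      (forall D1 D2, isDer mX D1 -> isDer mX D2 ->
          isInn mY (f (lbr D1 D2) - lbr (f D1) (f D2)) /\ g (lbr D1 D2) = 0)].

(** Basis: vertices (inl) and arrows (inr); paths are concatenated left to
    right: e_{s a} a = a = a e_{t a}; all paths of length 2 vanish. *)
Section RSZ.
Variables (V E : finType) (s t : E -> V).

Definition srcb (b : V + E) : V := match b with inl v => v | inr a => s a end.
Definition tgtb (b : V + E) : V := match b with inl v => v | inr a => t a end.
Definition parb (b c : V + E) : bool := (srcb b == srcb c) && (tgtb b == tgtb c).

Definition rszm (b c : V + E) : option (V + E) :=
  match b, c with
  | inl i, inl j => if i == j then Some (inl i) else None
  | inl i, inr a => if s a == i then Some (inr a) else None
  | inr a, inl j => if t a == j then Some (inr a) else None
  | inr _, inr _ => None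
  end.

Definition non_isolated (v : V) : bool := [exists a, (s a == v) || (t a == v)].
(* same connected component of the underlying graph (= same block) *)
Definition adj : rel V :=
  fun u v => [exists a, ((s a == u) && (t a == v)) || ((s a == v) && (t a == u))].
Definition same_block (u v : V) : bool := connect adj u v.
End RSZ.

Section Glue.
Variables (V E : finType) (s t : E -> V) (v1 vn : V) (h : v1 != vn).

Definition gV := {v : V | v != vn}.
Definition glue (v : V) : gV := insubd (exist (fun x => x != vn) v1 h : gV) v.
Definition gs (a : E) : gV := glue (s a).
Definition gt (a : E) : gV := glue (t a).
Definition star (b : V + E) : gV + E :=
  match b with inl v => inl (glue v) | inr a => inr a end.

Definition special (a : E) (p : V + E) : bool :=
  [&& [|| s a == v1, s a == vn, t a == v1 | t a == vn],
      parb gs gt (inr a) (star p) & ~~ parb s t (inr a) p].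

(* coefficient of r||g' (r = a1 a2 a length-2 path of Q_B, g' in B_B) in
   delta^1_B(a||g): sum over the occurrences of a in r of the path obtained
   by replacing that occurrence by g, kept only if it lies in B_B
   (i.e. the product in the radical square zero algebra of Q_B). *)
Definition d1coef (k : fieldType) (a : E) (g : gV + E) (a1 a2 : E) (g' : gV + E) : k :=
  ((a1 == a) && (rszm gs gt g (inr a2) == Some g'))%:R
  + ((a2 == a) && (rszm gs gt (inr a1) g == Some g'))%:R.

(* Z_spp = 0 : every x in k((Q_B)_1||B_B) supported on the pairs alpha^*||p^*
   with (alpha,p) special and lying in Ker delta^1_B is zero. *)
Definition Zspp_zero (k : fieldType) : Prop :=
  forall x : E -> gV + E -> k,
    (forall a g, x a g != 0 -> exists p, special a p && (star p == g)) ->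
    (forall a1 a2 g', gt a1 == gs a2 ->
        \sum_(a : E) \sum_(g : gV + E) x a g * d1coef k a g a1 a2 g' = 0) ->
    forall a g, x a g = 0.
End Glue.

(* Main.v *)
Require Import Defs.
From HB Require Import structures.
From mathcomp Require Import all_boot all_order all_algebra.
From mathcomp Require Import ring.
Set Implicit Arguments. Unset Strict Implicit. Unset Printing Implicit Defensive.
Import Order.TTheory GRing.Theory Num.Theory.
Local Open Scope ring_scope.

Section Gen.
Variables (k : fieldType) (B : finType) (m : B -> B -> option B).

Lemma mulm_coord (x y : {ffun B -> k}) d :
  mulm m x y d = \sum_b \sum_c x b * y c * (m b c == Some d)%:R.
Proof.
rewrite /mulm sum_ffunE; apply: eq_bigr => b _; rewrite sum_ffunE.
apply: eq_bigr => c _; rewrite /scl ffunE.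
by case: (m b c) => [e|] /=; rewrite ?ffunE ?mulr0 // eq_sym.
Qed.

Lemma sum1 (F : B -> k) b0 : (forall b, b != b0 -> F b = 0) -> \sum_b F b = F b0.
Proof. by move=> H; rewrite (bigD1 b0) //= big1 ?addr0 // => b /H. Qed.

Lemma mulm_dlt b c : mulm m (dlt k b) (dlt k c) = oapp (@dlt k B) 0 (m b c).
Proof.
apply/ffunP=> d; rewrite mulm_coord (sum1 (b0 := b)); last first.
  by move=> b' nb; apply: big1 => c' _; rewrite /dlt ffunE (negbTE nb) !mul0r.
rewrite (sum1 (b0 := c)); last first.
  by move=> c' nc; rewrite /dlt !ffunE (negbTE nc) mulr0 mul0r.
rewrite /dlt !ffunE !eqxx !mul1r.
by case: (m b c) => [e|] /=; rewrite ?ffunE // eq_sym.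
Qed.

Lemma app_dlt (M : {ffun B -> {ffun B -> k}}) b : app M (dlt k b) = M b.
Proof.
apply/ffunP=> d; rewrite /app sum_ffunE (sum1 (b0 := b)).
  by rewrite /scl !ffunE eqxx mul1r.
by move=> c nc; rewrite /scl !ffunE (negbTE nc) mul0r.
Qed.

Lemma app0 (M : {ffun B -> {ffun B -> k}}) : app M 0 = 0.
Proof. by apply/ffunP=> d; rewrite /app sum_ffunE !ffunE big1 // => b _; rewrite /scl !ffunE mul0r. Qed.

Lemma app_coord (M : {ffun B -> {ffun B -> k}}) x d : app M x d = \sum_b x b * M b d.
Proof. by rewrite /app sum_ffunE; apply: eq_bigr => b _; rewrite /scl ffunE. Qed.
End Gen.
Lemma rszmP (V E : finType) (s t : E -> V) b c d : (rszm s t b c == Some d) =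
  ((b == d) && (c == inl (tgtb t d))) || ((c == d) && (b == inl (srcb s d))).
Proof.
case: b => [i|a]; case: c => [j|a']; case: d => [l|x] /=;
  rewrite ?orbF ?andbF ?andbb //; try (case: ifP => //);
  by repeat (case: eqP => //=); congruence.
Qed.

Section S.
Variables (k : fieldType) (B : finType).
Lemma sum2 (F : B -> k) b1 b2 : b1 != b2 ->
  (forall b, b != b1 -> b != b2 -> F b = 0) -> \sum_b F b = F b1 + F b2.
Proof.
move=> ne H; rewrite (bigD1 b1) //= (bigD1 b2) /=; last by rewrite eq_sym.
rewrite big1 ?addr0 //; last by move=> b /andP[n2 n1]; exact: H.
Qed.
End S.

Section RSZgen.
Variables (k : fieldType) (V E : finType) (s t : E -> V).
Local Notation m := (rszm s t).

Lemma mulmL (x y : {ffun V + E -> k}) i : mulm m x y (inl i) = x (inl i) * y (inl i).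
Proof.
rewrite mulm_coord (sum1 (b0 := inl i)); last first.
  by move=> b nb; apply: big1 => c _; rewrite rszmP /= (negbTE nb) andbF mulr0.
rewrite (sum1 (b0 := inl i)); last first.
  by move=> c nc; rewrite rszmP /= (negbTE nc) /= ?andbF mulr0.
by rewrite rszmP /= !eqxx mulr1.
Qed.

Lemma mulmR (x y : {ffun V + E -> k}) a :
  mulm m x y (inr a) = x (inr a) * y (inl (t a)) + x (inl (s a)) * y (inr a).
Proof.
rewrite mulm_coord (sum2 (b1 := inr a) (b2 := inl (s a))) //; last first.
  by move=> b n1 n2; apply: big1 => c _; rewrite rszmP /= (negbTE n1) (negbTE n2) !andbF mulr0.
congr (_ + _).
  rewrite (sum1 (b0 := inl (t a))); last first.
    by move=> c nc; rewrite rszmP /= (negbTE nc) /= ?andbF mulr0.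
  by rewrite rszmP /= !eqxx mulr1.
rewrite (sum1 (b0 := inr a)); last first.
  by move=> c nc; rewrite rszmP /= (negbTE nc) /= ?andbF mulr0.
rewrite rszmP /= !eqxx.
by rewrite mulr1.
Qed.
End RSZgen.

Section Der.
Variables (k : fieldType) (V E : finType) (s t : E -> V).
Local Notation m := (rszm s t).
Local Notation BB := (V + E)%type.

Lemma eqLL (i j : V) : (inl i == inl j :> BB) = (i == j). Proof. by []. Qed.
Lemma eqRR (i j : E) : (inr i == inr j :> BB) = (i == j). Proof. by []. Qed.
Lemma eqLR (i : V) (j : E) : (inl i == inr j :> BB) = false. Proof. by []. Qed.
Lemma eqRL (i : V) (j : E) : (inr j == inl i :> BB) = false. Proof. by []. Qed.
Definition seqE := (eqLL, eqRR, eqLR, eqRL).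

Lemma derE (M : {ffun BB -> {ffun BB -> k}}) : isDer m M <->
  (forall b c d, oapp M 0 (m b c) d = mulm m (M b) (dlt k c) d + mulm m (dlt k b) (M c) d).
Proof.
split=> H b c.
  move=> d; have := congr1 (fun F : {ffun BB -> k} => F d) (H b c).
  by rewrite mulm_dlt ffunE; case: (m b c) => [e|] /=; rewrite ?app_dlt ?app0 ?ffunE.
apply/ffunP=> d; rewrite mulm_dlt ffunE -H.
by case: (m b c) => [e|] /=; rewrite ?app_dlt ?app0 ?ffunE.
Qed.

Definition derS (M : {ffun BB -> {ffun BB -> k}}) :=
  [/\ forall i j, M (inl i) (inl j) = 0,
      forall i a, (s a == i) = (t a == i) -> M (inl i) (inr a) = 0,
      forall a, s a != t a -> M (inl (s a)) (inr a) + M (inl (t a)) (inr a) = 0,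
      forall a j, M (inr a) (inl j) = 0 &
      forall a x, ~~ parb s t (inr a) (inr x) -> M (inr a) (inr x) = 0].

Lemma dltE (b d : BB) : dlt k b d = (d == b)%:R. Proof. by rewrite ffunE. Qed.

Lemma xxx (x : k) : x = x + x -> x = 0.
Proof. by move/(congr1 (fun y => y - x)); rewrite subrr addrK => ->. Qed.

Lemma derP (M : {ffun BB -> {ffun BB -> k}}) : (2%:R != 0 :> k) -> isDer m M <-> derS M.
Proof.
move=> two; split.
  move/derE=> H; split.
  - move=> i j; have := H (inl i) (inl i) (inl j).
    rewrite /= eqxx /= !mulmL !dltE !seqE.
    by case: eqP => [->|_]; rewrite ?mulr1 ?mul1r ?mulr0 ?mul0r ?addr0 //; apply: xxx.
  - move=> i a e; have := H (inl i) (inl i) (inr a).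
    rewrite /= eqxx /= !mulmR !dltE !seqE.
    case: (eqVneq (s a) i) => [si|nsi]; rewrite -e.
      by rewrite si eqxx !mulr1 !mul1r !mulr0 !mul0r !addr0 !add0r; apply: xxx.
    by rewrite (negbTE nsi) !mulr0 !mul0r !addr0.
  - move=> a ne; have := H (inl (s a)) (inl (t a)) (inr a).
    rewrite /= (negbTE ne) /= !mulmR !dltE !seqE !eqxx mulr1 mul1r !mulr0 !mul0r addr0 add0r => <-.
    by rewrite ffunE.
  - move=> a j; case: (eqVneq j (t a)) => [->|njt].
      case: (eqVneq (s a) (t a)) => [st|nst].
        have := H (inr a) (inr a) (inr a).
        rewrite /= ffunE !mulmR !dltE !seqE !eqxx !mulr0 !mul0r !mulr1 !mul1r add0r addr0 st.
        move/esym/eqP; rewrite -mulr2n -mulr_natr mulf_eq0 (negbTE two) orbF => /eqP.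
        done.
      have := H (inl (s a)) (inr a) (inl (t a)).
      rewrite /= eqxx /= !mulmL !dltE !seqE eq_sym (negbTE nst) mulr0 mul0r add0r.
      by [].
    have := H (inr a) (inl (t a)) (inl j).
    rewrite /= eqxx /= !mulmL !dltE !seqE (negbTE njt) mulr0 mul0r addr0.
    by [].
  - move=> a x; rewrite /parb /= => npar.
    case: (eqVneq (t a) (t x)) => [tt|ntt].
      have := H (inl (s a)) (inr a) (inr x).
      rewrite /= eqxx /= !mulmR !dltE !seqE !mulr0 !mul0r !add0r.
      case: (eqVneq a x) npar => [<-|nax]; first by rewrite !eqxx.
      rewrite tt eqxx andbT mulr0 add0r => nss.
      by rewrite [s x == _]eq_sym (negbTE nss) mul0r.
    have := H (inr a) (inl (t a)) (inr x).
    rewrite /= eqxx /= !mulmR !dltE !seqE !mulr0 !addr0.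
    case: (eqVneq a x) npar => [<-|nax]; first by rewrite !eqxx.
    by move=> _; rewrite [t x == _]eq_sym (negbTE ntt) mulr0 !mul0r !addr0.
case=> d1 d2 d3 d4 d5; apply/derE => b c d.
case: b => [i|a]; case: c => [j|b]; case: d => [l|x]; rewrite /= ?mulmL ?mulmR !dltE !seqE.
all: rewrite ?d1 ?d4 ?mulr0 ?mul0r ?addr0 ?add0r.
- by case: ifP => _ /=; rewrite ?d1 ?ffunE.
- case: (eqVneq i j) => [<-|nij] /=.
    case e1: (s x == i); case e2: (t x == i); rewrite ?mulr1 ?mul1r ?mulr0 ?mul0r ?addr0 ?add0r //.
    1,2: by rewrite d2 ?e1 ?e2 ?addr0.
  rewrite ffunE.
  case: (eqVneq (s x) i) => [si|nsi]; case: (eqVneq (t x) j) => [tj|ntj];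
    rewrite ?mulr1 ?mul1r ?mulr0 ?mul0r ?addr0 ?add0r //.
  + by rewrite -si -tj d3 // si tj.
  + by rewrite d2 // si (negbTE nij) (negbTE ntj).
  + by rewrite d2 // (negbTE nsi) tj eq_sym (negbTE nij).
- by case: ifP => _ /=; rewrite ?d4 ?ffunE.
- case: (boolP (parb s t (inr b) (inr x))) => [/andP[/eqP /= sbx _]|np]; last first.
    by rewrite d5 // mulr0; case: ifP => _ /=; rewrite ?d5 ?ffunE.
  by rewrite sbx; case: ifP => _ /=; rewrite ?mul1r ?mul0r ?ffunE.
- by case: ifP => _ /=; rewrite ?d4 ?ffunE.
- case: (boolP (parb s t (inr a) (inr x))) => [/andP[_ /eqP /= tax]|np]; last first.
    by rewrite d5 // mul0r; case: ifP => _ /=; rewrite ?d5 ?ffunE.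
  by rewrite tax; case: ifP => _ /=; rewrite ?mulr1 ?mulr0 ?ffunE.
- by rewrite ffunE.
- by rewrite ffunE.
Qed.
End Der.

Section Ad.
Variables (k : fieldType) (V E : finType) (s t : E -> V).
Local Notation m := (rszm s t).
Local Notation BB := (V + E)%type.

Lemma adL (a : {ffun BB -> k}) b l : (mulm m a (dlt k b) - mulm m (dlt k b) a) (inl l) = 0.
Proof. by rewrite !ffunE !mulmL !dltE mulrC subrr. Qed.

Lemma adR (a : {ffun BB -> k}) b x : (mulm m a (dlt k b) - mulm m (dlt k b) a) (inr x) =
  a (inr x) * ((inl (t x) == b)%:R - (inl (s x) == b)%:R) + (inr x == b)%:R * (a (inl (s x)) - a (inl (t x))).
Proof. rewrite !ffunE !mulmR !dltE; ring. Qed.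

Lemma lbrE (M N : {ffun BB -> {ffun BB -> k}}) b d :
  lbr M N b d = \sum_c N b c * M c d - \sum_c M b c * N c d.
Proof. by rewrite /lbr /comp !ffunE !app_coord. Qed.
End Ad.

Section Main.
Variables (k : fieldType) (V E : finType) (s t : E -> V) (v1 vn : V).
Hypothesis hchar : [pchar k] =i pred0.
Hypothesis hne : v1 != vn.
Hypothesis hblock : same_block s t v1 vn.
Hypothesis hZ : Zspp_zero s t hne k.

Local Notation gl := (glue hne).
Local Notation gs' := (gs s hne).
Local Notation gt' := (gt t hne).

Lemma val_glue v : val (gl v) = if v != vn then v else v1.
Proof. by rewrite /glue val_insubd. Qed.

Lemma glue_vn : gl vn = gl v1.
Proof. by apply: val_inj; rewrite !val_glue hne; case: ifP => // /negP. Qed.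

Lemma glue_eq u w : gl u = gl w -> u != w -> (u == v1) || (u == vn).
Proof.
move/(congr1 val); rewrite !val_glue /=.
case: (eqVneq u vn) => [->|nu]; first by rewrite orbT.
case: (eqVneq w vn) => [->|nw] /= e; first by rewrite e eqxx.
by rewrite e eqxx.
Qed.

Lemma parAB a x : parb s t (inr a) (inr x) -> parb gs' gt' (inr a) (inr x).
Proof. by case/andP=> /= /eqP e1 /eqP e2; rewrite /parb /= /gs /gt e1 e2 !eqxx. Qed.

Lemma parBA a x : parb gs' gt' (inr a) (inr x) -> parb s t (inr a) (inr x).
Proof.
move=> pB; apply/negPn/negP => npA.
pose X := fun (a' : E) (g : gV vn + E) => ((a' == a) && (g == inr x))%:R : k.
have := hZ (x := X) _ _ a (inr x); rewrite /X !eqxx /= => H.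
have : (1 : k) = 0.
  apply: H.
    move=> a' g; case: (eqVneq a' a) => [->|]; last by rewrite /= mulr0n eqxx.
    case: (eqVneq g (inr x)) => [->|]; last by rewrite /= mulr0n eqxx.
    move=> _; exists (inr x); rewrite /special /= pB npA eqxx ?andbT.
    move: pB npA; rewrite /parb /= /gs /gt.
    case/andP=> /eqP e1 /eqP e2.
    case: (eqVneq (s a) (s x)) => [es|ns].
      move=> /= nt.
      by case/orP: (glue_eq e2 nt) => ->; rewrite !orbT.
    by move=> _; case/orP: (glue_eq e1 ns) => ->; rewrite ?orbT.
  move=> a1 a2 g' _; apply: big1 => a' _; apply: big1 => g _.
  case: g => [u|y]; first by rewrite /= andbF mul0r.
  by rewrite /d1coef /= !andbF addr0 mulr0.
by move/eqP; rewrite oner_eq0.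
Qed.
End Main.

Lemma flow (k : fieldType) (V E : finType) (s t : E -> V) x y :
  connect (adj s t) x y -> exists w : E -> k,
  forall phi : V -> k, \sum_a w a * (phi (s a) - phi (t a)) = phi x - phi y.
Proof.
move/connectP=> [p pp ->] {y}; elim: p x pp => [|z p IH] x /=.
  by move=> _; exists (fun _ => 0) => phi; rewrite subrr big1 // => a _; rewrite mul0r.
case/andP=> /existsP[a ha] /IH[w Hw].
pose e : k := if (s a == x) && (t a == z) then 1 else -1.
exists (fun b => w b + e * (b == a)%:R) => phi.
rewrite (eq_bigr (fun b => w b * (phi (s b) - phi (t b)) + e * ((b == a)%:R * (phi (s b) - phi (t b))))); last first.
  by move=> b _; rewrite mulrDl mulrA.
rewrite big_split /= Hw -big_distrr /= (sum1 (b0 := a)); last first.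
  by move=> b nb; rewrite (negbTE nb) mul0r.
rewrite eqxx mul1r /e; case: ifP ha => [/andP[/eqP -> /eqP ->] _|_ /= /andP[/eqP -> /eqP ->]].
  by rewrite mul1r; ring.
by ring.
Qed.

Section Main2.
Variables (k : fieldType) (V E : finType) (s t : E -> V) (v1 vn : V).
Hypothesis hchar : [pchar k] =i pred0.
Hypothesis hne : v1 != vn.
Hypothesis hZ : Zspp_zero s t hne k.
Variable om : E -> k.
Hypothesis Hom : forall phi : V -> k, \sum_a om a * (phi (s a) - phi (t a)) = phi v1 - phi vn.

Local Notation gl := (glue hne).
Local Notation gs' := (gs s hne).
Local Notation gt' := (gt t hne).
Local Notation mA := (rszm s t).
Local Notation mB := (rszm gs' gt').
Local Notation BA := (V + E)%type.
Local Notation BB := (gV vn + E)%type.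

Lemma sum_inr (A B : finType) (F : A + B -> k) :
  (forall u, F (inl u) = 0) -> \sum_c F c = \sum_y F (inr y).
Proof. by move=> H; rewrite big_sumType /= big1 ?add0r. Qed.

Definition Pa a b := parb s t (inr a) (inr b).
Definition cnt a : k := \sum_b (Pa a b)%:R.
Definition w a : k := (\sum_b (Pa a b)%:R * om b) / cnt a.

Lemma Pa_refl a : Pa a a. Proof. by rewrite /Pa /parb !eqxx. Qed.
Lemma Pa_trans a c : Pa a c -> forall b, Pa a b = Pa c b.
Proof. by rewrite /Pa /parb /= => /andP[/eqP -> /eqP ->]. Qed.
Lemma Pa_sym a b : Pa a b = Pa b a.
Proof. by rewrite /Pa /parb /= [s a == _]eq_sym [t a == _]eq_sym. Qed.

Lemma cnt_neq0 a : cnt a != 0.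
Proof.
have -> : cnt a = (\sum_b nat_of_bool (Pa a b))%:R by rewrite natr_sum.
by rewrite (pcharf0P _).1 // -lt0n (bigD1 a) //= Pa_refl.
Qed.

Lemma cnt_eq a c : Pa a c -> cnt a = cnt c.
Proof. by move=> h; apply: eq_bigr => b _; rewrite (Pa_trans h). Qed.

Lemma w_eq a c : Pa a c -> w a = w c.
Proof.
move=> h; rewrite /w (cnt_eq h); congr (_ / _).
by apply: eq_bigr => b _; rewrite (Pa_trans h).
Qed.

Lemma avg (phi : V -> k) :
  \sum_a w a * (phi (s a) - phi (t a)) = phi v1 - phi vn.
Proof.
rewrite -Hom.
rewrite (eq_bigr (fun a => \sum_b (Pa a b)%:R * om b * (phi (s a) - phi (t a)) / cnt a)); last first.
  by move=> a _; rewrite /w mulrAC !mulr_suml.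
rewrite exchange_big /=; apply: eq_bigr => b _.
rewrite (eq_bigr (fun a => (Pa a b)%:R * (om b * (phi (s b) - phi (t b)) / cnt b))); last first.
  move=> a _; case: (boolP (Pa a b)) => h; last by rewrite !mul0r.
  rewrite (cnt_eq h); move: h; rewrite /Pa /parb /= => /andP[/eqP -> /eqP ->].
  by rewrite !mul1r.
rewrite -mulr_suml.
have -> : \sum_a (Pa a b)%:R = cnt b :> k by apply: eq_bigr => a _; rewrite Pa_sym.
by rewrite mulrC divfK ?cnt_neq0.
Qed.

Lemma two : (2%:R : k) != 0.
Proof. by rewrite (pcharf0P _).1. Qed.

Definition gg (D : {ffun BB -> {ffun BB -> k}}) : k := \sum_a w a * D (inr a) (inr a).
Definition ff (D : {ffun BB -> {ffun BB -> k}}) : {ffun BA -> {ffun BA -> k}} :=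
  [ffun b => [ffun d => match b, d with inr a, inr x => D (inr a) (inr x) | _, _ => 0 end]].

Lemma ffRR D a x : ff D (inr a) (inr x) = D (inr a) (inr x). Proof. by rewrite !ffunE. Qed.
Lemma ffL D v d : ff D (inl v) d = 0. Proof. by rewrite !ffunE. Qed.
Lemma ffRL D a l : ff D (inr a) (inl l) = 0. Proof. by rewrite !ffunE. Qed.

Lemma ff_der D : isDer mB D -> isDer mA (ff D).
Proof.
move/(derP _ _ _ two) => [d1 d2 d3 d4 d5]; apply/(derP _ _ _ two); split.
- by move=> *; rewrite !ffunE.
- by move=> *; rewrite !ffunE.
- by move=> *; rewrite !ffunE addr0.
- by move=> *; rewrite !ffunE.
move=> a x npa; rewrite !ffunE; apply: d5; apply: contra npa => h; exact: (parBA hZ h).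
Qed.

Lemma ff_lin c D1 D2 : ff (sclE c D1 + D2) = sclE c (ff D1) + ff D2.
Proof.
apply/ffunP=> b; apply/ffunP=> d; rewrite !ffunE.
by case: b => [i|a]; case: d => [l|x]; rewrite ?ffunE ?mulr0 ?addr0.
Qed.

Lemma gg_lin c D1 D2 : gg (sclE c D1 + D2) = c * gg D1 + gg D2.
Proof.
rewrite /gg mulr_sumr -big_split /=; apply: eq_bigr => a _; rewrite !ffunE.
ring.
Qed.

Lemma lam_glue (lam : V -> k) : lam v1 = lam vn -> forall v, lam (val (gl v)) = lam v.
Proof. by move=> e v; rewrite val_glue /=; case: eqP => // ->. Qed.

Lemma gg_inn D : isDer mB D -> ((isInn mA (ff D) /\ gg D = 0) <-> isInn mB D).
Proof.
move=> hD; have [d1 d2 d3 d4 d5] := (derP _ _ D two).1 hD.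
split.
  case=> [[a Ha] g0].
  pose lam v := a (inl v).
  have HD : forall al x, D (inr al) (inr x) = (x == al)%:R * (lam (s x) - lam (t x)).
    move=> al x; have := congr1 (fun F : {ffun BA -> k} => F (inr x)) (Ha (inr al)).
    by rewrite adR !seqE !ffunE subrr mulr0 add0r.
  have lv : lam v1 = lam vn.
    have : gg D = lam v1 - lam vn.
      by rewrite -avg /gg; apply: eq_bigr => al _; rewrite HD eqxx mul1r.
    by rewrite g0 => /eqP; rewrite eq_sym subr_eq0 => /eqP.
  exists [ffun b : BB => match b with inl u => lam (val u)
     | inr x => if gs' x != gt' x then D (inl (gt' x)) (inr x) else 0 end].
  move=> b; apply/ffunP => d; case: b => [u|al]; case: d => [l|x];
    rewrite ?adL ?adR ?ffunE /= ?seqE.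
  - exact: d1.
  - rewrite mul0r addr0.
    case: (eqVneq (gs' x) (gt' x)) => [e|ne] /=.
      by rewrite mul0r; apply: d2; rewrite e.
    case: (eqVneq (gt' x) u) => [<-|nt].
      by rewrite (negbTE ne) subr0 mulr1.
    case: (eqVneq (gs' x) u) => [<-|ns].
      by rewrite sub0r mulrN1; apply/eqP; rewrite -addr_eq0 d3.
    by rewrite subrr mulr0; apply: d2; rewrite (negbTE nt) (negbTE ns).
  - exact: d4.
  - rewrite subrr mulr0 add0r HD /gs /gt !lam_glue //.
case=> a' Ha'.
pose psi u := a' (inl u).
have HD : forall al x, D (inr al) (inr x) = (x == al)%:R * (psi (gs' x) - psi (gt' x)).
  move=> al x; rewrite Ha' adR !seqE.
  by rewrite subrr mulr0 add0r.
split.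
  exists [ffun b : BA => (match b with inl v => psi (gl v) | inr _ => 0 end : k)].
  move=> b; apply/ffunP => d; case: b => [v|al]; case: d => [l|x];
    rewrite ?adL ?adR !ffunE /= ?seqE ?mul0r ?add0r //.
rewrite /gg (eq_bigr (fun a => w a * (psi (gl (s a)) - psi (gl (t a))))); last first.
  by move=> a _; rewrite HD eqxx mul1r.
by rewrite (avg (fun v => psi (gl v))) glue_vn subrr.
Qed.

Lemma surj D' c : isDer mA D' ->
  exists D, [/\ isDer mB D, isInn mA (ff D - D') & gg D = c].
Proof.
move=> hD'; have [d1 d2 d3 d4 d5] := (derP _ _ D' two).1 hD'.
pose z a : k := (s a == v1)%:R - (t a == v1)%:R.
pose kap := c - \sum_a w a * D' (inr a) (inr a).
pose D : {ffun BB -> {ffun BB -> k}} := [ffun b => [ffun d => (match b, d with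
   inr a, inr x => D' (inr a) (inr x) + (x == a)%:R * (kap * z a) | _, _ => 0 end : k)]].
exists D; split.
- apply/(derP _ _ _ two); split.
  + by move=> *; rewrite !ffunE.
  + by move=> *; rewrite !ffunE.
  + by move=> *; rewrite !ffunE addr0.
  + by move=> *; rewrite !ffunE.
  move=> a x npB; rewrite !ffunE d5; last by apply: contra npB => h; exact: parAB.
  case: (eqVneq x a) npB => [->|]; last by rewrite mul0r addr0.
  by rewrite /parb !eqxx.
- exists [ffun b : BA => (match b with inl v => kap * (v == v1)%:R
      | inr x => - (if s x != t x then D' (inl (t x)) (inr x) else 0) end : k)].
  move=> b; apply/ffunP => d; case: b => [u|al]; case: d => [l|x];
    rewrite ?adL ?adR !ffunE /= ?seqE.
  + by rewrite d1 subrr.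
  + rewrite mul0r addr0 sub0r.
    case: (eqVneq (s x) (t x)) => [e|ne] /=.
      by rewrite oppr0 mul0r d2 ?oppr0 // e.
    case: (eqVneq (t x) u) => [<-|nt].
      by rewrite (negbTE ne) subr0 mulr1.
    case: (eqVneq (s x) u) => [<-|ns].
      by rewrite sub0r mulrN1 opprK; apply/eqP; rewrite eq_sym -addr_eq0 addrC d3.
    by rewrite subrr mulr0 d2 ?oppr0 // (negbTE nt) (negbTE ns).
  + by rewrite d4 subrr.
  + rewrite subrr mulr0 add0r addrAC subrr add0r /z.
    case: (eqVneq x al) => [->|nx]; last by rewrite !mul0r.
    by rewrite !mul1r mulrBr.
rewrite /gg (eq_bigr (fun a => w a * D' (inr a) (inr a) + kap * (w a * z a))); last first.
  by move=> a _; rewrite !ffunE eqxx mul1r mulrDr mulrCA.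
rewrite big_split /= -mulr_sumr /z (avg (fun v => (v == v1)%:R)) eqxx eq_sym (negbTE hne).
by rewrite subr0 mulr1 /kap addrC subrK.
Qed.

Lemma brk D1 D2 : isDer mB D1 -> isDer mB D2 ->
  isInn mA (ff (lbr D1 D2) - lbr (ff D1) (ff D2)) /\ gg (lbr D1 D2) = 0.
Proof.
move=> h1 h2.
have [a1 b1 c1 e1 f1] := (derP _ _ D1 two).1 h1.
have [a2 b2 c2 e2 f2] := (derP _ _ D2 two).1 h2.
have eqf : ff (lbr D1 D2) = lbr (ff D1) (ff D2).
  apply/ffunP=> b; apply/ffunP=> d; rewrite [RHS]lbrE.
  case: b => [v|al]; case: d => [l|x].
  - by rewrite !ffunE /= !big1 ?subr0 // => c _; rewrite !ffunE /= mul0r.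
  - by rewrite !ffunE /= !big1 ?subr0 // => c _; rewrite !ffunE /= mul0r.
  - by rewrite !ffunE /= !big1 ?subr0 // => c _; case: c => *; rewrite !ffunE /= mulr0.
  rewrite ffRR lbrE !sum_inr; try by move=> u; rewrite ?ffRL ?e1 ?e2 mul0r.
  by congr (_ - _); apply: eq_bigr => y _; rewrite !ffRR.
split.
  exists 0 => b; rewrite eqf subrr; apply/ffunP => d; case: d => [l|x].
    by rewrite adL !ffunE.
  by rewrite adR !ffunE !mul0r subrr mulr0 addr0.
have wD : forall D : {ffun BB -> {ffun BB -> k}}, (forall a x, ~~ parb gs' gt' (inr a) (inr x) -> D (inr a) (inr x) = 0) ->
    forall al y, w al * D (inr al) (inr y) = w y * D (inr al) (inr y).
  move=> D hd al y; case: (boolP (Pa al y)) => h; first by rewrite (w_eq h).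
  by rewrite hd ?mulr0 //; apply: contra h => h'; exact: (parBA hZ h').
rewrite /gg (eq_bigr (fun al => \sum_y w y * D2 (inr al) (inr y) * D1 (inr y) (inr al)
     - \sum_y w al * D1 (inr al) (inr y) * D2 (inr y) (inr al))); last first.
  move=> al _; rewrite lbrE !sum_inr; try by move=> u; rewrite ?e1 ?e2 mul0r.
  rewrite mulrBr !mulr_sumr; congr (_ - _); apply: eq_bigr => y _.
    by rewrite mulrA wD.
  by rewrite mulrA.
rewrite sumrB; apply/eqP; rewrite subr_eq0; apply/eqP.
rewrite [RHS]exchange_big /=; apply: eq_bigr => al _; apply: eq_bigr => y _.
by rewrite mulrAC.
Qed.
End Main2.

Theorem corollary3p28 (k : fieldType) (V E : finType) (s t : E -> V)
  (v1 vn : V)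
  (hchar : [pchar k] =i pred0)
  (hne : v1 != vn)
  (hiso1 : non_isolated s t v1) (hison : non_isolated s t vn)
  (hblock : same_block s t v1 vn)
  (hZ : Zspp_zero s t hne k) :
  HH1_iso_times_k k (rszm (gs s hne) (gt t hne)) (rszm s t).
Proof.
have [om Hom] := flow k hblock.
exists (@ff k V E vn), (gg s t om); split.
- move=> D hD; exact: (ff_der hchar hZ hD).
- move=> c D1 D2 _ _; split; [exact: ff_lin | exact: gg_lin].
- move=> D hD; exact: (gg_inn hchar Hom hD).
- move=> D' c hD'; exact: (surj hchar hne Hom c hD').
- move=> D1 D2 h1 h2; exact: (brk hchar hZ om h1 h2).
Qed.
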